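(* Let $y\in\tilde W$ and $s\in\tilde{\mathbb S}$, and assume $s=s_H$ is the reflection in the affine root hyperplane $H=H_{\alpha,k}$ with $\alpha\in\Sigma$, $k\in\mathbb Z$. Let $\beta\in\Sigma$. (1) If $\beta\notin\{\pm\alpha,\pm\bar y\delta(\alpha)\}$, then $sy\delta(s)\mathbf a\geqslant_{\bar s(\beta)}\mathbf a$ if and only if $y\mathbf a\geqslant_\beta\mathbf a$. (2) If $\beta\neq\pm\bar y\delta(\alpha)$, then $y\mathbf a\geqslant_\beta\mathbf a$ if and only if $y\delta(s)\mathbf a\geqslant_\beta\mathbf a$.
   Context: Let $\tilde W=X_*(T)_\Gamma\rtimes W$ be the Iwahori–Weyl group of a quasi-split connected semisimple group $G$ over a local field $F$ (finite extension of $\mathbb Q_p$ or $\mathbb F_q((\epsilon))$) split over a tamely ramified extension, relative to a maximal $L$-split torus $S$ defined over $F$ with centralizer $T$, where $L$ is the completion of the maximal unramified extension of $F$ and $\Gamma=\mathrm{Gal}(\bar L/L)$. Let $\delta$ be the automorphism of $\tilde W$ induced by the Frobenius $\sigma$ of $L/F$; it also acts on $W$ and on the root system $\Sigma$ below. $V=X_*(T)_\Gamma\otimes\mathbb R$; $\Sigma$ is the reduced root system such that affine roots are $v\mapsto\langle a,v\rangle+k$, $a\in\Sigma,k\in\mathbb Z$; $H_{a,k}=\{v\in V:\langle a,v\rangle=k\}$; $W=W(\Sigma)$. $\mathbf a$ is a fixed $\sigma$-stable base alcove; $\tilde W$ acts on alcoves; $\tilde{\mathbb S}$ is the set of simple affine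 reflections (reflections in walls of $\mathbf a$). For $x\in\tilde W$, $\bar x$ denotes its image under the projection $\tilde W\to W$. For $a\in\Sigma$ and an alcove $\mathbf b$, $k(a,\mathbf b)$ is the unique integer $k$ such that $\mathbf b$ lies between $H_{a,k}$ and $H_{a,k-1}$; for alcoves $\mathbf b_1,\mathbf b_2$, $\mathbf b_1\geqslant_a\mathbf b_2$ means $k(a,\mathbf b_1)\ge k(a,\mathbf b_2)$. *)

(* Defs.v *)
From HB Require Import structures.
From mathcomp Require Import all_boot all_order all_algebra.
From mathcomp Require Import all_classical all_reals all_analysis.
Set Implicit Arguments. Unset Strict Implicit. Unset Printing Implicit Defensive.
Import Order.TTheory GRing.Theory Num.Theory.
Import numFieldTopology.Exports numFieldNormedType.Exports.
Local Open Scope ring_scope.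
Local Open Scope classical_set_scope.

(* V = 'cV[R]_n (column vectors); V^* = 'rV[R]_n (row vectors);
   pairing <a, v> = a *m v.  Linear maps of V are matrices acting on the left. *)
Section IW.
Variables (R : realType) (n : nat).
Local Notation V := 'cV[R]_n.
Local Notation Vd := 'rV[R]_n.

Definition pair (a : Vd) (v : V) : R := (a *m v) 0 0.

Definition is_int (x : R) : Prop := exists z : int, x = z%:~R.

(* Sigma is a reduced root system in V^* (spanning, since G is semisimple),
   cor a is the coroot a^vee in V of a. *)
Definition reduced_root_system (Sigma : seq Vd) (cor : Vd -> V) : Prop :=
  [/\ 0 \notin Sigma,
      row_full (\matrix_(i < size Sigma) Sigma`_i),
      (forall a, a \in Sigma -> pair a (cor a) = 2) &
      [/\ 
(forall a b, a \in Sigma -> b \in Sigma -> b - pair b (cor a) *: a \in Sigma),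
      (forall a b, a \in Sigma -> b \in Sigma -> is_int (pair b (cor a))) &
      (forall a b (c : R), a \in Sigma -> b \in Sigma -> b = c *: a -> c = 1 \/ c = -1)]].

Definition refl (cor : Vd -> V) (a : Vd) : 'M[R]_n := 1%:M - cor a *m a.

Inductive inW (Sigma : seq Vd) (cor : Vd -> V) : 'M[R]_n -> Prop :=
| inW1 : inW Sigma cor 1%:M
| inWs a w : a \in Sigma -> inW Sigma cor w -> inW Sigma cor (refl cor a *m w).

(* action of a linear map w of V on V^*: (w.a)(v) = a(w^-1 v) *)
Definition actR (w : 'M[R]_n) (a : Vd) : Vd := a *m invmx w.

(* elements of the Iwahori-Weyl group, through their action on V:
   x = (xbar, t) acts by v |-> xbar v + t  (t^lambda w  with lambda = t). *)
Definition aff := ('M[R]_n * V)%type.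
Definition act (x : aff) (v : V) : V := x.1 *m v + x.2.
Definition amul (x y : aff) : aff := (x.1 *m y.1, x.1 *m y.2 + x.2).
Definition bar (x : aff) : 'M[R]_n := x.1.

(* Lam = image of X_*(T)_Gamma in V *)
Definition in_IW (Sigma : seq Vd) (cor : Vd -> V) (Lam : set V) (x : aff) : Prop :=
  inW Sigma cor x.1 /\ Lam x.2.

(* delta: induced by the (linear) Frobenius action sigma on V *)
Definition delta (sigma : 'M[R]_n) (x : aff) : aff :=
  (sigma *m x.1 *m invmx sigma, sigma *m x.2).

(* affine reflection s_H in H = H_{a,k}: v |-> v - (<a,v> - k) a^vee *)
Definition sref (cor : Vd -> V) (a : Vd) (k : int) : aff :=
  (refl cor a, k%:~R *: cor a).

Definition Hyp (a : Vd) (k : int) : set V := [set v | pair a v = k%:~R].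

Definition Vreg (Sigma : seq Vd) : set V :=
  [set v | forall a (k : int), a \in Sigma -> pair a v <> k%:~R].

Definition is_alcove (Sigma : seq Vd) (b : set V) : Prop :=
  exists v, Vreg Sigma v /\ b = connected_component (Vreg Sigma) v.

Definition is_wall (Sigma : seq Vd) (b : set V) (a : Vd) (k : int) : Prop :=
  exists p, closure b p /\ pair a p = k%:~R /\
    (forall c (m : int), c \in Sigma -> pair c p = m%:~R -> Hyp c m = Hyp a k).

Definition simple_refl (Sigma : seq Vd) (cor : Vd -> V) (base : set V) (s : aff) : Prop :=
  exists a k, a \in Sigma /\ is_wall Sigma base a k /\ s = sref cor a k.

Definition img (x : aff) (b : set V) : set V := act x @` b.

Definition between (a : Vd) (b : set V) (k : int) : Prop :=
  forall v, b v -> k%:~R - 1 < pair a v < k%:~R.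

Definition geq_at (a : Vd) (b1 b2 : set V) : Prop :=
  exists k1 k2 : int, [/\ between a b1 k1, between a b2 k2 & (k2 <= k1)%R].

Definition IW_setting (Sigma : seq Vd) (cor : Vd -> V) (Lam : set V)
  (sigma : 'M[R]_n) (base : set V) : Prop :=
  [/\ reduced_root_system Sigma cor,
      [/\ Lam 0, (forall u v, Lam u -> Lam v -> Lam (u - v)),
          (forall a, a \in Sigma -> Lam (cor a)),
          (forall a u, a \in Sigma -> Lam u -> is_int (pair a u)) &
          (forall w u, inW Sigma cor w -> Lam u -> Lam (w *m u))],
      [/\ sigma \in unitmx, (exists m, (0 < m)%N /\ sigma ^+ m = 1),
          (forall u, Lam u <-> Lam (sigma *m u)),
          (forall w, inW Sigma cor w -> inW Sigma cor (sigma *m w *m invmx sigma)) &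
          (forall a, a \in Sigma -> actR sigma a \in Sigma)],
      is_alcove Sigma base &
      img (sigma, 0) base = base].

End IW.

(* Main.v *)
Require Import Defs.
From HB Require Import structures.
From mathcomp Require Import all_boot all_order all_algebra.
From mathcomp Require Import all_classical all_reals all_analysis.
Import Order.TTheory GRing.Theory Num.Theory.
Import numFieldTopology.Exports numFieldNormedType.Exports.
Local Open Scope ring_scope.
Local Open Scope classical_set_scope.
From mathcomp Require Import ring lra zify.

Section H.
Variables (R : realType) (n : nat).
Local Notation V := 'cV[R]_n.
Local Notation Vd := 'rV[R]_n.
Local Notation pair := (@pair R n).

Lemma pairM (a : Vd) (M : 'M[R]_n) v : pair a (M *m v) = pair (a *m M) v.
Proof. by rewrite /pair mulmxA. Qed.
Lemma pairD a (u v : V) : pair a (u + v) = pair a u + pair a v.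
Proof. by rewrite /pair mulmxDr !mxE. Qed.
Lemma pairB a (u v : V) : pair a (u - v) = pair a u - pair a v.
Proof. by rewrite /pair mulmxBr !mxE. Qed.
Lemma pairZ a c (v : V) : pair a (c *: v) = c * pair a v.
Proof. by rewrite /pair -scalemxAr mxE. Qed.
Lemma pair0 a : pair a (0 : V) = 0.
Proof. by rewrite /pair mulmx0 mxE. Qed.
Lemma pairDl (a b : Vd) v : pair (a + b) v = pair a v + pair b v.
Proof. by rewrite /pair mulmxDl !mxE. Qed.
Lemma pairNl (a : Vd) v : pair (- a) v = - pair a v.
Proof. by rewrite /pair mulNmx !mxE. Qed.
Lemma pairZl (a : Vd) c v : pair (c *: a) v = c * pair a v.
Proof. by rewrite /pair -scalemxAl mxE. Qed.

Lemma mulmx_pair (u : V) (a : Vd) (v : V) : u *m a *m v = pair a v *: u.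
Proof. by rewrite -mulmxA [a *m v]mx11_scalar mul_mx_scalar. Qed.

Lemma pair_ext (a b : Vd) : (forall v, pair a v = pair b v) -> a = b.
Proof.
move=> H; apply/rowP => j; have := H (delta_mx j 0).
by rewrite /pair -!colE !mxE.
Qed.

Lemma pair_lip (a : Vd) (p v : V) (e : R) :
  (forall i, `|p i 0 - v i 0| < e) ->
  `|pair a v - pair a p| <= (\sum_j `|a 0 j|) * e.
Proof.
move=> H; rewrite -pairB /pair mxE mulr_suml.
apply: (le_trans (ler_norm_sum _ _ _)); apply: ler_sum => j _.
rewrite normrM ler_wpM2l //; rewrite !mxE distrC; exact: ltW.
Qed.

Lemma pair_near (a : Vd) (p : V) (e : R) : 0 < e ->
  exists2 d : R, 0 < d & forall v : V, (forall i, `|p i 0 - v i 0| < d) ->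
    `|pair a v - pair a p| < e.
Proof.
move=> e0; set C := \sum_j `|a 0 j|.
have C0 : 0 <= C by apply: sumr_ge0 => j _.
exists (e / (C + 1)); first by rewrite divr_gt0 // ltr_wpDl.
move=> v /pair_lip H; apply: (le_lt_trans (H a)).
rewrite mulrA ltr_pdivrMr ?ltr_wpDl // -/C mulrC ltr_pM2l // ltrDl ltr01. all: try done.
Qed.

Lemma pair_cont (a : Vd) : continuous (pair a).
Proof.
move=> u A /nbhs_ballP[e /= e0 eA].
apply/nbhs_ballP; have [d d0 Hd] := @pair_near a u e e0.
exists d => //= v [_ uv]; apply: eA; rewrite /ball /= distrC; apply: Hd => i; exact: uv.
Qed.

Lemma closure_approx (b : set V) (p : V) (a1 a2 : Vd) (e : R) : closure b p -> 0 < e ->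
  exists v, [/\ b v, `|pair a1 v - pair a1 p| < e & `|pair a2 v - pair a2 p| < e].
Proof.
move=> cl e0.
have [d1 d10 H1] := @pair_near a1 p e e0.
have [d2 d20 H2] := @pair_near a2 p e e0.
have dp : 0 < Order.min d1 d2 by rewrite lt_min d10 d20.
have := nbhsx_ballx p _ dp.
move=> /cl [v [bv [_ pv]]]; exists v; split => //.
  apply: H1 => i; apply: (lt_le_trans (pv i 0)); rewrite ge_min lexx //.
apply: H2 => i; apply: (lt_le_trans (pv i 0)); rewrite ge_min lexx orbT //.
Qed.


Lemma refl_mul (cor : Vd -> V) a v : refl cor a *m v = v - pair a v *: cor a.
Proof. by rewrite /refl mulmxBl mul1mx mulmx_pair. Qed.

Lemma act_sref (cor : Vd -> V) a (k : int) v :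
  act (sref cor a k) v = v - (pair a v - k%:~R) *: cor a.
Proof. by rewrite /act /sref /= refl_mul scalerBl opprB addrA addrAC. Qed.

Lemma mul_refl (cor : Vd -> V) a (b : Vd) : b *m refl cor a = b - pair b (cor a) *: a.
Proof.
by rewrite /refl mulmxBr mulmx1 (mulmxA b) [b *m cor a]mx11_scalar mul_scalar_mx.
Qed.

Lemma refl_invol (cor : Vd -> V) a : pair a (cor a) = 2 ->
  refl cor a *m refl cor a = 1%:M.
Proof.
move=> H; rewrite {1}/refl mulmxBl mul1mx -(mulmxA (cor a)) mul_refl H.
have -> : a - 2 *: a = - a by rewrite scaler_nat mulr2n opprD addrA subrr add0r.
by rewrite mulmxN /refl opprK subrK.
Qed.

End H.

Section H3.
Variables (R : realType) (n : nat).
Local Notation V := 'cV[R]_n.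
Local Notation Vd := 'rV[R]_n.
Local Notation pair := (@Defs.pair R n).

Lemma inW_prop (Sigma : seq Vd) cor w : reduced_root_system Sigma cor ->
  inW Sigma cor w -> w \in unitmx /\ forall b, b \in Sigma -> b *m w \in Sigma.
Proof.
move=> [_ _ H2 [Hr _ _]]; elim => [|a w' aS _ [u IH]].
  by split; [exact: unitmx1 | move=> b bS; rewrite mulmx1].
split.
  rewrite unitmx_mul u andbT.
  by have [] := mulmx1_unit (@refl_invol R n cor a (H2 a aS)).
move=> b bS; rewrite mulmxA mul_refl; apply: IH; exact: Hr.
Qed.

Lemma between_img (g : Vd) (x : aff R n) (b : set V) (m z : int) :
  pair g x.2 = z%:~R ->
  (between g (img x b) m <-> between (g *m x.1) b (m - z)).
Proof.
move=> Hz; split.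
  move=> H v bv; have /andP[h1 h2] := H (act x v) (ex_intro2 _ _ v bv erefl).
  move: h1 h2; rewrite /act pairD pairM Hz intrB => h1 h2.
  by apply/andP; split; lra.
move=> H _ [v bv <-]; have /andP[h1 h2] := H v bv.
move: h1 h2; rewrite /act pairD pairM Hz intrB => h1 h2.
by apply/andP; split; lra.
Qed.

Lemma between_uniq (g : Vd) (b : set V) v0 k1 k2 : b v0 ->
  between g b k1 -> between g b k2 -> k1 = k2.
Proof.
move=> bv H1 H2; have /andP[a1 b1] := H1 v0 bv; have /andP[a2 b2] := H2 v0 bv.
have h1 : (k1 - 1 < k2)%R by rewrite -(ltr_int R) intrB; apply: lt_trans b2.
have h2 : (k2 - 1 < k1)%R by rewrite -(ltr_int R) intrB; apply: lt_trans b1.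
lia.
Qed.


Lemma geqE (g : Vd) (x : aff R n) (b : set V) v0 (k1 k2 z : int) : b v0 ->
  pair g x.2 = z%:~R -> between (g *m x.1) b k1 -> between g b k2 ->
  (geq_at g (img x b) b <-> (k2 <= k1 + z)%R).
Proof.
move=> bv Hz H1 H2; split.
  move=> [k1' [k2' [h1 h2 le]]].
  move/(@between_img g x b k1' z Hz): h1 => h1.
  have e1 := @between_uniq _ b v0 _ _ bv h1 H1; have e2 := @between_uniq _ b v0 _ _ bv h2 H2.
  lia.
move=> le; exists (k1 + z), k2; split => //.
by apply/(@between_img g x b (k1 + z) z Hz); rewrite addrK.
Qed.

Lemma strip (Sigma : seq Vd) (b : set V) v0 (g : Vd) :
  b = connected_component (Vreg Sigma) v0 -> Vreg Sigma v0 -> g \in Sigma ->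
  exists k : int, between g b k.
Proof.
move=> eb reg gS.
have bv0 : b v0 by rewrite eb; exact: connected_component_refl.
have breg : b `<=` Vreg Sigma by rewrite eb; exact: connected_component_sub.
have cE : connected (pair g @` b).
  apply: connected_continuous_connected.
    rewrite eb; exact: component_connected.
  apply: continuous_subspaceT; exact: pair_cont.
have /connected_intervalP iE := cE.
set fl := Num.floor (pair g v0).
have hfl := floor_itv (pair g v0); rewrite -/fl in hfl; case/andP: hfl => f1 f2.
exists (fl + 1) => v bv; apply/andP; split.
  rewrite intrD addrK; rewrite ltNge; apply/negP => le.
  have : (pair g @` b) fl%:~R.
    by apply: (iE (pair g v) (pair g v0)); [exists v | exists v0 | rewrite le f1].
  by case=> w bw ew; exact: (breg w bw g fl gS ew).
rewrite ltNge; apply/negP => le.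
have : (pair g @` b) (fl + 1)%:~R.
  by apply: (iE (pair g v0) (pair g v)); [exists v0 | exists v | rewrite le ltW].
by case=> w bw ew; exact: (breg w bw g (fl + 1) gS ew).
Qed.


Lemma sigma_Sig (Sigma : seq Vd) (sg : 'M[R]_n) : sg \in unitmx ->
  (forall a, a \in Sigma -> a *m invmx sg \in Sigma) ->
  forall a, a \in Sigma -> a *m sg \in Sigma.
Proof.
move=> u H a aS.
pose f (c : Vd) := c *m invmx sg.
have finj : injective f by apply: (can_inj (g := fun c => c *m sg)) => c; rewrite /f mulmxKV.
have s1u : uniq (map f (undup Sigma)) by rewrite map_inj_uniq // undup_uniq.
have sub : {subset map f (undup Sigma) <= undup Sigma}.
  by move=> c /mapP[d dS ->]; rewrite mem_undup H // -mem_undup.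
have hs : (size (undup Sigma) <= size (map f (undup Sigma)))%N by rewrite size_map.
have [_ E] := uniq_min_size s1u sub hs.
have : a \in map f (undup Sigma) by rewrite E mem_undup.
case/mapP => d dS ->; by rewrite /f mulmxKV // -mem_undup.
Qed.

Lemma hyp_scal (g al : Vd) (c : V) (m k : int) : pair al c = 2 ->
  (forall v, pair g v = m%:~R <-> pair al v = k%:~R) ->
  g = (pair g c / 2) *: al.
Proof.
move=> Hc H.
pose p0 : V := (k%:~R / 2) *: c.
have hp0 : pair al p0 = k%:~R by rewrite pairZ Hc mulfVK // pnatr_eq0.
have gp0 : pair g p0 = m%:~R by apply/H.
apply: pair_ext => v; rewrite pairZl.
pose w := v - (pair al v / 2) *: c.
have hw : pair al (p0 + w) = k%:~R.
  by rewrite pairD pairB pairZ Hc mulfVK ?pnatr_eq0 // subrr addr0.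
have := proj2 (H _) hw; rewrite pairD gp0 => e1.
have : pair g w = 0 by lra.
rewrite pairB pairZ => /eqP; rewrite subr_eq0 => /eqP ->.
ring.
Qed.

Lemma hyp_pm (Sigma : seq Vd) cor (g al : Vd) (m k : int) :
  reduced_root_system Sigma cor -> g \in Sigma -> al \in Sigma ->
  Hyp g m = Hyp al k -> g = al \/ g = - al.
Proof.
move=> [_ _ H2 [_ _ Hred]] gS aS E.
have Hiff : forall v, pair g v = m%:~R <-> pair al v = k%:~R.
  move=> v; split => h.
    by have : Hyp al k v by rewrite -E.
  by have : Hyp g m v by rewrite E.
have := @hyp_scal g al (cor al) m k (H2 al aS) Hiff => eg.
case: (Hred al g _ aS gS eg) => hc; rewrite hc in eg; [left; rewrite eg scale1r | right; rewrite eg scaleN1r] => //.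
Qed.

Lemma approx_interval (x lo hi : R) :
  (forall e, 0 < e -> exists y, `|y - x| < e /\ lo < y < hi) -> lo <= x <= hi.
Proof.
move=> H; apply/andP; split; rewrite leNgt; apply/negP => lt.
  have hh : 0 < lo - x by rewrite subr_gt0.
  have [y [h1 /andP[h2 h3]]] := H (lo - x) hh.
  move: h1; rewrite ltr_norml => /andP[_ h]; lra.
have hh : 0 < x - hi by rewrite subr_gt0.
have [y [h1 /andP[h2 h3]]] := H (x - hi) hh.
move: h1; rewrite ltr_norml => /andP[h _]; lra.
Qed.

Lemma adj (b : set V) (p : V) (al g g' : Vd) (k z m m' : int) :
  (forall e, 0 < e -> exists v, [/\ b v, `|pair g v - pair g p| < e &
       `|pair al v - pair al p| < e]) ->
  pair al p = k%:~R -> (forall j : int, pair g p <> j%:~R) ->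
  (forall v, pair g' v = pair g v - z%:~R * pair al v) ->
  between g b m -> between g' b m' -> m = m' + z * k.
Proof.
move=> ap hk nint hg' Bm Bm'.
set x := pair g p.
have A : m%:~R - 1 <= x <= m%:~R.
  apply: approx_interval => e e0.
  have [v [bv h1 _]] := ap e e0; exists (pair g v); split => //; exact: Bm.
have B : (m' + z * k)%:~R - 1 <= x <= (m' + z * k)%:~R.
  apply: approx_interval => e e0.
  have C0 : 0 < 1 + `|z%:~R : R| by rewrite ltr_wpDr.
  have [v [bv h1 h2]] := ap (e / (1 + `|z%:~R|)) (divr_gt0 e0 C0).
  exists (pair g' v + (z * k)%:~R); split.
    rewrite hg' intrM -hk.
    have -> : pair g v - z%:~R * pair al v + z%:~R * pair al p - x =
       (pair g v - x) - z%:~R * (pair al v - pair al p) by rewrite /x; ring.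
    apply: (le_lt_trans (ler_normB _ _)); rewrite normrM.
    set d := e / (1 + `|z%:~R|) in h1 h2 *.
    have h3 : `|z%:~R| * `|pair al v - pair al p| <= `|z%:~R| * d.
      by apply: ler_wpM2l => //; exact: ltW.
    have -> : e = d * (1 + `|z%:~R|) by rewrite /d mulfVK // gt_eqF.
    rewrite -/x in h1; lra.
  have /andP[b1 b2] := Bm' v bv; rewrite intrD; apply/andP; split; lra.
case: (ltrgtP m (m' + z * k)) => // hlt.
  have : ((m + 1)%:~R : R) <= (m' + z * k)%:~R by rewrite ler_int; lia.
  rewrite intrD => h; case/andP: A => A1 A2; case/andP: B => B1 B2.
  have : x = m%:~R by lra.
  by move/nint.
have : (((m' + z * k) + 1)%:~R : R) <= m%:~R by rewrite ler_int; lia.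
rewrite (intrD _ (m' + z * k)) => h; case/andP: A => A1 A2; case/andP: B => B1 B2.
have : x = (m' + z * k)%:~R by lra.
by move/nint.
Qed.

End H3.

Theorem lemma4p4p2 (R : realType) (n : nat) (Sigma : seq 'rV[R]_n)
  (cor : 'rV[R]_n -> 'cV[R]_n) (Lam : set 'cV[R]_n) (sigma : 'M[R]_n)
  (base : set 'cV[R]_n) :
  IW_setting Sigma cor Lam sigma base ->
  forall (y s : aff R n) (alpha : 'rV[R]_n) (k : int),
  in_IW Sigma cor Lam y ->
  simple_refl Sigma cor base s ->
  alpha \in Sigma -> s = sref cor alpha k ->
  let yda := actR (bar y) (actR sigma alpha) in
  (forall beta, beta \in Sigma ->
     beta \notin [:: alpha; - alpha; yda; - yda] ->
     (geq_at (actR (bar s) beta)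
        (img (amul (amul s y) (delta sigma s)) base) base
      <-> geq_at beta (img y base) base)) /\
  (forall beta, beta \in Sigma ->
     beta \notin [:: yda; - yda] ->
     (geq_at beta (img y base) base
      <-> geq_at beta (img (amul y (delta sigma s)) base) base)).
Proof.
move=> [RS [L0 LB Lcor Lint LW] [su [mm [m0 sm]] Lsg Wsg Ssg] [v0 [reg0 eb]] sb].
move=> y s alpha k [yW yL] [a0 [k0 [a0S [wall es0]]]] aS es yda.
have RS' := RS; case: RS' => [_ _ Hc2 [Hrefl Hint Hred]].
set cA := cor alpha.
have Hc : pair alpha cA = 2 by exact: Hc2.
have [yu yS] := @inW_prop R n Sigma cor _ RS yW.
have Ssg' : forall a, a \in Sigma -> a *m invmx sigma \in Sigma by exact: Ssg.
have sigS := @sigma_Sig R n Sigma sigma su Ssg'.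
have bv0 : base v0 by rewrite eb; exact: connected_component_refl.
have hstrip : forall g, g \in Sigma -> exists K : int, between g base K.
  by move=> g gS; exact: (@strip R n Sigma base v0 g eb reg0 gS).
case: wall => p [clp [pa0 Hw]].
have hpa : pair alpha p = k%:~R.
  have e1 : act s p = p by rewrite es0 act_sref pa0 subrr scale0r subr0.
  move: e1; rewrite es act_sref => /eqP; rewrite subr_eq addrC -subr_eq subrr eq_sym.
  rewrite scaler_eq0 => /orP[]; first by rewrite subr_eq0 => /eqP.
  by move=> /eqP c0; move: Hc; rewrite /cA c0 pair0 => /eqP; rewrite eq_sym pnatr_eq0.
have nint_p : forall g, g \in Sigma -> g != alpha -> g != - alpha ->
    forall j : int, pair g p <> j%:~R.
  move=> g gS n1 n2 j hj.
  have E : Hyp g j = Hyp alpha k by rewrite (Hw g j gS hj) (Hw alpha k aS hpa).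
  case: (@hyp_pm R n Sigma cor g alpha j k RS gS aS E) => eg.
    by move/eqP: n1.
  by move/eqP: n2.
have ap_p : forall g al e, 0 < e -> exists v, [/\ base v, `|pair g v - pair g p| < e &
       `|pair al v - pair al p| < e].
  by move=> g al e e0; exact: closure_approx.
have sbase : forall v, base v -> base (sigma *m v).
  move=> v bv; rewrite -sb; exists v => //; by rewrite /act /= addr0.
pose q := sigma *m p.
have ap_q : forall g al e, 0 < e -> exists v, [/\ base v, `|pair g v - pair g q| < e &
       `|pair al v - pair al q| < e].
  move=> g al e e0; have [v [bv h1 h2]] := ap_p (g *m sigma) (al *m sigma) e e0.
  by exists (sigma *m v); split; [exact: sbase | rewrite /q !pairM | rewrite /q !pairM].
pose al' := alpha *m invmx sigma.
pose u := sigma *m cA.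
have al'S : al' \in Sigma by exact: Ssg'.
have hqa : pair al' q = k%:~R by rewrite /q pairM /al' mulmxKV.
have hal'u : pair al' u = 2 by rewrite /u pairM /al' mulmxKV.
have nint_q : forall g, g \in Sigma -> g != al' -> g != - al' ->
    forall j : int, pair g q <> j%:~R.
  move=> g gS n1 n2 j; rewrite /q pairM; apply: nint_p; first exact: sigS.
    apply: contra n1 => /eqP e; by rewrite /al' -e mulmxK.
  apply: contra n2 => /eqP e; by rewrite /al' -mulNmx -e mulmxK.
pose S := refl cor alpha.
pose T := sigma *m S *m invmx sigma.
have pairT : forall g v, pair (g *m T) v = pair g v - pair g u * pair al' v.
  move=> g v; rewrite /T -pairM -!mulmxA refl_mul mulmxBr mulKVmx //.
  rewrite -scalemxAr pairB pairZ -/u mulrC; congr (_ - _ * _).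
  by rewrite pairM.
have core2 : forall beta, beta \in Sigma -> beta != yda -> beta != - yda ->
  exists Kg KgT zg zt Kb : int,
    [/\ between (beta *m y.1) base Kg, between (beta *m y.1 *m T) base KgT,
        Kg = KgT + zg * k, pair (beta *m y.1) u = zg%:~R &
        pair beta y.2 = zt%:~R /\ between beta base Kb].
  move=> beta bS n1 n2.
  set g := beta *m y.1.
  have gS : g \in Sigma by exact: yS.
  have gn1 : g != al'.
    apply: contra n1 => /eqP e; by rewrite /yda /actR /bar -/al' -e /g mulmxK.
  have gn2 : g != - al'.
    apply: contra n2 => /eqP e; by rewrite /yda /actR /bar -/al' -mulNmx -e /g mulmxK.
  have gTS : g *m T \in Sigma.
    rewrite /T !mulmxA; apply: Ssg'; rewrite /S mul_refl; apply: Hrefl => //.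
    exact: sigS.
  have [Kg hKg] := hstrip g gS.
  have [KgT hKgT] := hstrip _ gTS.
  have [Kb hKb] := hstrip beta bS.
  have [zg hzg] : is_int (pair g u).
    rewrite /u pairM; apply: Hint => //; exact: sigS.
  have [zt hzt] := Lint beta y.2 bS yL.
  exists Kg, KgT, zg, zt, Kb; split => //.
  apply: (@adj R n base q al' g (g *m T) k zg Kg KgT) => //.
    by move=> e e0; exact: ap_q.
    exact: nint_q.
  by move=> v; rewrite pairT hzg.
clear es0; subst s.
have hx2 : forall beta zg zt, pair (beta *m y.1) u = zg%:~R -> pair beta y.2 = zt%:~R ->
    pair beta (amul y (delta sigma (sref cor alpha k))).2 = (k * zg + zt)%:~R.
  move=> beta zg zt h4 h5.
  rewrite /amul /delta /sref /= pairD pairM -scalemxAr pairZ.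
  change (sigma *m cor alpha) with u; by rewrite h4 h5 intrD intrM.
have hx1 : forall beta : 'rV[R]_n, beta *m (amul y (delta sigma (sref cor alpha k))).1 = beta *m y.1 *m T.
  by move=> beta; rewrite /= (mulmxA beta).
split; last first.
  move=> beta bS; rewrite !inE => /norP[n1 n2].
  have [Kg [KgT [zg [zt [Kb [h1 h2 h3 h4 [h5 h6]]]]]]] := core2 beta bS n1 n2.
  rewrite (@geqE R n beta y base v0 Kg Kb zt bv0 h5 h1 h6).
  have h2' : between (beta *m (amul y (delta sigma (sref cor alpha k))).1) base KgT by rewrite hx1.
  rewrite (@geqE R n beta _ base v0 KgT Kb (k * zg + zt) bv0 (hx2 _ _ _ h4 h5) h2' h6).
  lia.
move=> beta bS; rewrite !inE => /norP[na1 /norP[na2 /norP[n1 n2]]].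
have [Kg [KgT [zg [zt [Kb [h1 h2 h3 h4 [h5 h6]]]]]]] := core2 beta bS n1 n2.
have SS : S *m S = 1%:M := @refl_invol R n cor alpha Hc.
have Su : S \in unitmx := (mulmx1_unit SS).1.
have Sinv : invmx S = S.
  by rewrite -[RHS]mul1mx -(mulVmx Su) -mulmxA SS mulmx1.
have -> : actR (bar (sref cor alpha k)) beta = beta *m S by rewrite /actR /bar /= Sinv.
have b1S : beta *m S \in Sigma by rewrite /S mul_refl; exact: Hrefl.
have [zb hzb] := Hint alpha beta aS bS.
have [K1 hK1] := hstrip _ b1S.
have eK : Kb = K1 + zb * k.
  apply: (@adj R n base p alpha beta (beta *m S) k zb Kb K1) => //.
  - by move=> e e0; exact: ap_p.
  - exact: nint_p.
  - by move=> v; rewrite -pairM /S refl_mul pairB pairZ -/cA hzb mulrC.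
have SSb : forall M : 'M[R]_n, beta *m S *m (S *m M) = beta *m M.
  by move=> M; rewrite (mulmxA (beta *m S)) -(mulmxA beta) SS mulmx1.
set x1 := amul (amul (sref cor alpha k) y) (delta sigma (sref cor alpha k)).
have hx1' : between (beta *m S *m x1.1) base KgT.
  rewrite /x1 /=; change (refl cor alpha) with S; by rewrite -(mulmxA S) SSb (mulmxA beta).
have hx2' : pair (beta *m S) x1.2 = (k * zg + zt - k * zb)%:~R.
  rewrite /x1 /amul /delta /sref /=; change (refl cor alpha) with S.
  rewrite !pairD (@pairM R n (beta *m S) (S *m y.1)) SSb pairM.
  have h4' : pair (beta *m y.1 *m sigma) (cor alpha) = zg%:~R by rewrite -pairM.
  have hzb' : pair beta (cor alpha) = zb%:~R by [].
  rewrite (@pairM R n (beta *m S) S) -(mulmxA beta S S) SS mulmx1 h5.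
  rewrite !pairZ h4' -(@pairM R n beta S) /S refl_mul pairB pairZ Hc hzb'.
  rewrite intrB !intrD !intrM; lra.
rewrite (@geqE R n (beta *m S) x1 base v0 KgT K1 _ bv0 hx2' hx1' hK1).
rewrite (@geqE R n beta y base v0 Kg Kb zt bv0 h5 h1 h6).
lia.
Qed.
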